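(* Let $\Phi\colon\mathcal{M}(2;\mathbb{C})\to\mathcal{M}(2;\mathbb{C})$ be a polynomial automorphism compatible with conjugation. Then the restriction $\Phi_{|\mathcal{D}}$ (identified with a polynomial automorphism of $\mathbb{C}^2$) is an elementary automorphism; in particular $\Phi$ preserves a polynomial fibration $\mathcal{L}\colon\mathcal{M}(2;\mathbb{C})\to\mathbb{C}$ transverse to $\mathcal{D}$, in the sense that $\mathcal{L}_{|\mathcal{D}}\colon\mathcal{D}\to\mathbb{C}$ is nonconstant.
   Context: $\mathcal{M}(2;\mathbb{C})$ is the space of complex $2\times2$ matrices and $\mathcal{D}=\{\mathrm{diag}(\lambda_1,\lambda_2)\}\simeq\mathbb{C}^2$ the diagonal matrices. A rational map $\Phi$ is compatible with conjugation if $\mathrm{A}\Phi(\mathrm{M})\mathrm{A}^{-1}=\Phi(\mathrm{A}\mathrm{M}\mathrm{A}^{-1})$ for all $\mathrm{A}\in\mathrm{GL}(2;\mathbb{C})$ whenever $\mathrm{M}$ and $\mathrm{A}\mathrm{M}\mathrm{A}^{-1}$ lie outside the indeterminacy locus of $\Phi$. Such a $\Phi$ maps $\mathcal{D}$ into $\mathcal{D}$. An elementary automorphism of $\mathbb{C}^2$ is one conjugate in the group of polynomial automorphisms to a map $(x,y)\mapsto(\alpha x+P(y),\beta y+\gamma)$ with $\alpha,\beta\in\mathbb{C}^*$, $\gamma\in\mathbb{C}$, $P\in\mathbb{C}[y]$. $\Phi$ preserves the fibration given by $\mathcal{L}$ if the foliation by level sets of $\mathcal{L}$ is invariant by $\Phi$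 (i.e. $\Phi$ maps level sets of $\mathcal{L}$ into level sets of $\mathcal{L}$). *)

(* Defs.v *)
From HB Require Import structures.
From mathcomp Require Import all_boot all_order all_algebra.
From mathcomp Require Import reals.
From mathcomp Require Import complex.
From mathcomp Require Import mpoly.
Set Implicit Arguments. Unset Strict Implicit. Unset Printing Implicit Defensive.
Import Order.TTheory GRing.Theory Num.Theory.
Local Open Scope ring_scope.

Section Defs.
Variable K : fieldType.

(* coordinates of a 2x2 matrix in K^4 : (m11, m12, m21, m22) *)
Definition mx_coords (M : 'M[K]_2) : 'I_4 -> K := fun k => mxvec M 0 k.

Definition pt_coords (z : K * K) : 'I_2 -> K :=
  fun k => if val k == 0%N then z.1 else z.2.

Definition poly_mx_map (F : 'M[K]_2 -> 'M[K]_2) : Prop :=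
  exists p : 'I_2 -> 'I_2 -> {mpoly K[4]},
    forall M i j, F M i j = (p i j).@[mx_coords M].

Definition poly_mx_fun (L : 'M[K]_2 -> K) : Prop :=
  exists p : {mpoly K[4]}, forall M, L M = p.@[mx_coords M].

Definition poly_mx_aut (F : 'M[K]_2 -> 'M[K]_2) : Prop :=
  poly_mx_map F /\
  exists G, poly_mx_map G /\ cancel F G /\ cancel G F.

Definition poly_map2 (f : K * K -> K * K) : Prop :=
  exists p q : {mpoly K[2]},
    forall z, f z = (p.@[pt_coords z], q.@[pt_coords z]).

Definition poly_aut2 (f : K * K -> K * K) : Prop :=
  poly_map2 f /\ exists g, poly_map2 g /\ cancel f g /\ cancel g f.

Definition elementary_aut (f : K * K -> K * K) : Prop :=
  exists (psi psiinv : K * K -> K * K),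
    poly_aut2 psi /\ cancel psi psiinv /\ cancel psiinv psi /\
    exists (a b c : K) (P : {poly K}),
      a != 0 /\ b != 0 /\
      forall z, f z = psiinv ((a * (psi z).1 + P.[(psi z).2],
                                b * (psi z).2 + c)).

(* compatibility with conjugation (Phi polynomial: no indeterminacy) *)
Definition conj_compatible (Phi : 'M[K]_2 -> 'M[K]_2) : Prop :=
  forall A : 'M[K]_2, A \in unitmx ->
    forall M, A *m Phi M *m invmx A = Phi (A *m M *m invmx A).

Definition dmx (z : K * K) : 'M[K]_2 :=
  \matrix_(i, j) if i == j then (if i == ord0 then z.1 else z.2) else 0.

Definition diag_restr (Phi : 'M[K]_2 -> 'M[K]_2) (z : K * K) : K * K :=
  (Phi (dmx z) ord0 ord0, Phi (dmx z) ord_max ord_max).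

Definition preserves_fibration (Phi : 'M[K]_2 -> 'M[K]_2) (L : 'M[K]_2 -> K) :=
  forall M N, L M = L N -> L (Phi M) = L (Phi N).

Definition transverse_to_D (L : 'M[K]_2 -> K) : Prop :=
  exists z w : K * K, L (dmx z) != L (dmx w).

End Defs.

(* Main.v *)
Require Import Defs.
From HB Require Import structures.
From mathcomp Require Import all_boot all_order all_algebra.
From mathcomp Require Import reals.
From mathcomp Require Import complex.
From mathcomp Require Import mpoly.
From mathcomp Require Import ring.
Set Implicit Arguments. Unset Strict Implicit. Unset Printing Implicit Defensive.
Import Order.TTheory GRing.Theory Num.Theory.
Local Open Scope ring_scope.

Section Uni.
Variable K : numClosedFieldType.

Definition pf (g : K -> K) := exists q : {poly K}, forall t, g t = q.[t].

Lemma pf_ext g h : (forall t, g t = h t) -> pf g -> pf h.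
Proof. by move=> e [q hq]; exists q => t; rewrite -e. Qed.

Lemma pf_const c : pf (fun _ => c).
Proof. by exists c%:P => t; rewrite hornerC. Qed.

Lemma pf_id : pf (fun t => t).
Proof. by exists 'X => t; rewrite hornerX. Qed.

Lemma pf_add g h : pf g -> pf h -> pf (fun t => g t + h t).
Proof. by move=> [p hp] [q hq]; exists (p + q) => t; rewrite hornerD hp hq. Qed.

Lemma pf_opp g : pf g -> pf (fun t => - g t).
Proof. by move=> [p hp]; exists (- p) => t; rewrite hornerN hp. Qed.

Lemma pf_sub g h : pf g -> pf h -> pf (fun t => g t - h t).
Proof. by move=> hg hh; apply: pf_add => //; apply: pf_opp. Qed.

Lemma pf_mul g h : pf g -> pf h -> pf (fun t => g t * h t).
Proof. by move=> [p hp] [q hq]; exists (p * q) => t; rewrite hornerM hp hq. Qed.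

Lemma pf_exp g n : pf g -> pf (fun t => g t ^+ n).
Proof.
move=> hg; elim: n => [|n IH]; first by apply: (pf_ext _ (pf_const 1)) => t; rewrite expr0.
by apply: (pf_ext _ (pf_mul hg IH)) => t; rewrite exprS.
Qed.

Lemma pf_sum (I : Type) (s : seq I) (F : I -> K -> K) :
  (forall i, pf (F i)) -> pf (fun t => \sum_(i <- s) F i t).
Proof.
move=> hF; elim: s => [|i s IH].
  by apply: (pf_ext _ (pf_const 0)) => t; rewrite big_nil.
by apply: (pf_ext _ (pf_add (hF i) IH)) => t; rewrite big_cons.
Qed.

Lemma pf_prod n (F : 'I_n -> K -> K) :
  (forall i, pf (F i)) -> pf (fun t => \prod_(i < n) F i t).
Proof.
move=> hF; rewrite /index_enum; elim: (Finite.enum _) => [|i s IH].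
  by apply: (pf_ext _ (pf_const 1)) => t; rewrite big_nil.
by apply: (pf_ext _ (pf_mul (hF i) IH)) => t; rewrite big_cons.
Qed.

Lemma poly_zero (q : {poly K}) : (forall t, q.[t] = 0) -> q = 0.
Proof.
move=> h; apply/eqP/negPn/negP => qn0.
suff : (size (mkseq (fun i => (i%:R : K)) (size q)) < size q)%N.
  by rewrite size_mkseq ltnn.
apply: max_poly_roots qn0 _ _.
  by apply/allP => x _; apply/rootP.
rewrite map_inj_uniq ?iota_uniq // => i j /eqP; rewrite eqr_nat => /eqP //.
Qed.

Lemma U1 g : pf g -> (forall t, g t != 0) -> forall t, g t = g 0.
Proof.
move=> [q hq] nz t.
have : size q == 1.
  apply/negPn/negP => /closed_rootP [x /rootP rx].
  by have := nz x; rewrite hq rx eqxx.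
by case/size_poly1P => c _ qE; rewrite !hq qE !hornerC.
Qed.

End Uni.


Section U3.
Variable K : numClosedFieldType.

Lemma deriv_root_all (q : {poly K}) : (3 <= size q)%N ->
  injective (horner q) -> forall x, q^`().[x] = 0.
Proof.
move=> hs inj x.
have [rs hrs] := closed_field_poly_normal (q - (q.[x])%:P).
have szq : size (q - (q.[x])%:P) = size q.
  by rewrite size_addl // size_opp size_polyC; case: (_ != 0) => //; apply: leq_trans hs.
have ln0 : lead_coef (q - (q.[x])%:P) != 0.
  by rewrite lead_coef_eq0 -size_poly_eq0 szq; apply/eqP => h; rewrite h in hs.
have szrs : size q = (size rs).+1.
  by rewrite -szq {1}hrs size_scale // size_prod_XsubC.
have allx : forall z, z \in rs -> z = x.
  move=> z zin; apply: inj.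
  have : root (q - (q.[x])%:P) z by rewrite hrs rootZ // root_prod_XsubC.
  by rewrite rootE hornerD hornerN hornerC subr_eq0 => /eqP.
move: hrs szrs; case: rs allx => [|z1 [|z2 rs]] allx hrs szrs; rewrite szrs in hs => //.
rewrite (allx z1) ?inE ?eqxx // (allx z2) ?inE ?eqxx ?orbT // in hrs.
have -> : q^`() = (q - (q.[x])%:P)^`() by rewrite derivB derivC subr0.
rewrite hrs !big_cons mulrA derivZ hornerZ derivM derivM derivXsubC.
rewrite !(hornerD, hornerM) !hornerX !hornerN !hornerC subrr.
by rewrite !(mul0r, mulr0, addr0, add0r).
Qed.

Lemma U3 (g : K -> K) : pf g -> injective g -> exists a b, forall t, g t = a * t + b.
Proof.
move=> [q hq] inj.
have injq : injective (horner q) by move=> x y; rewrite -!hq => /inj.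
have [hs|hs] := leqP (size q) 2.
  exists q`_1, q`_0 => t; rewrite hq (horner_coef_wide _ hs) !big_ord_recr big_ord0 /=.
  by rewrite add0r expr0 expr1 mulr1 addrC mulrC.
have d0 : q^`() = 0 by apply: (@poly_zero K) => t; apply: deriv_root_all.
have : q^`()`_(size q).-2 = 0 by rewrite d0 coef0.
rewrite coef_deriv; case E: (size q) hs => [|[|[|n]]] // _.
move/eqP; rewrite mulrn_eq0 /= => /eqP h.
have : lead_coef q != 0.
  by rewrite lead_coef_eq0 -size_poly_eq0 E.
by rewrite lead_coefE E h eqxx.
Qed.

End U3.


Section Mx.
Variable K : numClosedFieldType.

Definition mk2 (a b c d : K) : 'M[K]_2 :=
  \matrix_(i, j) if i == ord0 then (if j == ord0 then a else b)
                 else (if j == ord0 then c else d).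

Definition i1 : 'I_2 := ord_max.

Lemma mk2_00 a b c d : mk2 a b c d ord0 ord0 = a. Proof. by rewrite mxE. Qed.
Lemma mk2_01 a b c d : mk2 a b c d ord0 i1 = b. Proof. by rewrite mxE. Qed.
Lemma mk2_10 a b c d : mk2 a b c d i1 ord0 = c. Proof. by rewrite mxE. Qed.
Lemma mk2_11 a b c d : mk2 a b c d i1 i1 = d. Proof. by rewrite mxE. Qed.

Lemma ord2P (P : 'I_2 -> Prop) : P ord0 -> P i1 -> forall i, P i.
Proof.
move=> h0 h1 [[|[|//]]] Hi.
  by rewrite (_ : Ordinal Hi = ord0) //; apply: val_inj.
by rewrite (_ : Ordinal Hi = i1) //; apply: val_inj.
Qed.

Lemma mx2E (M : 'M[K]_2) : M = mk2 (M ord0 ord0) (M ord0 i1) (M i1 ord0) (M i1 i1).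
Proof.
apply/matrixP; apply: ord2P; apply: ord2P; by rewrite ?mk2_00 ?mk2_01 ?mk2_10 ?mk2_11.
Qed.

Lemma mk2_eq a b c d a' b' c' d' :
  a = a' -> b = b' -> c = c' -> d = d' -> mk2 a b c d = mk2 a' b' c' d'.
Proof. by move=> -> -> -> ->. Qed.

Lemma mk2_inj a b c d a' b' c' d' :
  mk2 a b c d = mk2 a' b' c' d' -> [/\ a = a', b = b', c = c' & d = d'].
Proof.
move=> e; split.
- by rewrite -(mk2_00 a b c d) e mk2_00.
- by rewrite -(mk2_01 a b c d) e mk2_01.
- by rewrite -(mk2_10 a b c d) e mk2_10.
- by rewrite -(mk2_11 a b c d) e mk2_11.
Qed.

Lemma mulmx2 a b c d a' b' c' d' :
  mk2 a b c d *m mk2 a' b' c' d' =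
  mk2 (a * a' + b * c') (a * b' + b * d') (c * a' + d * c') (c * b' + d * d').
Proof.
apply/matrixP; apply: ord2P; apply: ord2P;
  by rewrite !mxE !big_ord_recr big_ord0 /= !mxE add0r.
Qed.

Lemma addmx2 a b c d a' b' c' d' :
  mk2 a b c d + mk2 a' b' c' d' = mk2 (a + a') (b + b') (c + c') (d + d').
Proof. by apply/matrixP; apply: ord2P; apply: ord2P; rewrite !mxE. Qed.

Lemma scalemx2 t a b c d : t *: mk2 a b c d = mk2 (t * a) (t * b) (t * c) (t * d).
Proof. by apply/matrixP; apply: ord2P; apply: ord2P; rewrite !mxE. Qed.

Lemma dmxE (z : K * K) : dmx z = mk2 z.1 0 0 z.2.
Proof. by apply/matrixP; apply: ord2P; apply: ord2P; rewrite !mxE. Qed.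

Lemma unit_of a b c d a' b' c' d' :
  mk2 a b c d *m mk2 a' b' c' d' = 1%:M -> mk2 a b c d \in unitmx.
Proof. by move/mulmx1_unit => []. Qed.

Lemma id2 : (1%:M : 'M[K]_2) = mk2 1 0 0 1.
Proof. by apply/matrixP; apply: ord2P; apply: ord2P; rewrite !mxE. Qed.

Lemma conj_step (Phi : 'M[K]_2 -> 'M[K]_2) A M D :
  conj_compatible Phi -> A \in unitmx -> M *m A = A *m D ->
  Phi M *m A = A *m Phi D.
Proof.
move=> cc uA e.
have eM : A *m D *m invmx A = M by rewrite -e mulmxK.
by rewrite -eM -cc // mulmxKV.
Qed.

Lemma coordsE (M : 'M[K]_2) k : exists i j, mx_coords M k = M i j /\
   forall N : 'M[K]_2, mx_coords N k = N i j.
Proof.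
rewrite /mx_coords; case: (@mxvec_indexP 2 2 k) => i j.
by exists i, j; split => [|N]; rewrite mxvecE.
Qed.

Lemma pf_meval n (p : {mpoly K[n]}) (v : 'I_n -> K -> K) :
  (forall k, pf (v k)) -> pf (fun t => p.@[fun k => v k t]).
Proof.
move=> hv; apply: (pf_ext (fun t => esym (mevalE _ _))).
apply: pf_sum => m; apply: pf_mul; first exact: pf_const.
by apply: pf_prod => i; apply: pf_exp.
Qed.

Lemma pf_line (Phi : 'M[K]_2 -> 'M[K]_2) M0 M1 i j :
  poly_mx_map Phi -> pf (fun t => Phi (M0 + t *: M1) i j).
Proof.
move=> [p hp].
apply: (pf_ext (fun t => esym (hp _ i j))).
apply: pf_meval => k.
case: (coordsE M0 k) => i' [j' [_ h]].
apply: (pf_ext (fun t => esym (h (M0 + t *: M1)))).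
apply: (pf_ext (g := fun t => M0 i' j' + t * M1 i' j')).
  by move=> t; rewrite !mxE.
by apply: pf_add; [apply: pf_const | apply: pf_mul; [apply: pf_id|apply: pf_const]].
Qed.

End Mx.


Section Main.
Variable K : numClosedFieldType.
Variable Phi : 'M[K]_2 -> 'M[K]_2.
Hypothesis aut : poly_mx_aut Phi.
Hypothesis cc : conj_compatible Phi.

Definition F x y := Phi (dmx (x, y)) ord0 ord0.

Lemma two_neq0 : (2%:R : K) != 0.
Proof. by rewrite pnatr_eq0. Qed.

Lemma half_eq (b : K) : b = - b -> b = 0.
Proof.
move=> e; have : b *+ 2 == 0 by rewrite mulr2n {2}e subrr.
by rewrite mulrn_eq0 /= => /eqP.
Qed.

Lemma diag_off z : Phi (dmx z) ord0 i1 = 0 /\ Phi (dmx z) i1 ord0 = 0.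
Proof.
pose A := mk2 1 0 0 (-1 : K).
have uA : A \in unitmx.
  apply: (@unit_of _ 1 0 0 (-1) 1 0 0 (-1)); rewrite mulmx2 id2.
  by apply: mk2_eq; ring.
have e : dmx z *m A = A *m dmx z.
  by rewrite dmxE mulmx2 mulmx2; apply: mk2_eq; ring.
have h := conj_step cc uA e.
rewrite (mx2E (Phi (dmx z))) /A !mulmx2 in h.
case/mk2_inj: h => _ h1 h2 _.
split; apply: half_eq.
  by move: h1; rewrite !(mul0r, mulr0, add0r, addr0, mul1r, mulr1) mulrN1.
by move: h2; rewrite !(mul0r, mulr0, add0r, addr0, mul1r, mulr1) mulN1r.
Qed.

Lemma swapF x y : Phi (dmx (x, y)) i1 i1 = F y x.
Proof.
pose A := mk2 (0:K) 1 1 0.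
have uA : A \in unitmx.
  apply: (@unit_of _ 0 1 1 0 0 1 1 0); rewrite mulmx2 id2.
  by apply: mk2_eq; ring.
have e : dmx (x, y) *m A = A *m dmx (y, x).
  by rewrite !dmxE !mulmx2; apply: mk2_eq => /=; ring.
have h := conj_step cc uA e.
rewrite (mx2E (Phi (dmx (x, y)))) (mx2E (Phi (dmx (y, x)))) /A !mulmx2 in h.
case/mk2_inj: h => _ _ h _; move: h.
by rewrite !(mul0r, mulr0, add0r, addr0, mul1r, mulr1).
Qed.

Lemma PhidE x y : Phi (dmx (x, y)) = mk2 (F x y) 0 0 (F y x).
Proof.
have [h1 h2] := diag_off (x, y).
by rewrite (mx2E (Phi _)) h1 h2 swapF.
Qed.

Lemma Finj x y x' y' : F x y = F x' y' -> F y x = F y' x' -> x = x' /\ y = y'.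
Proof.
move=> e1 e2.
have e : Phi (dmx (x, y)) = Phi (dmx (x', y')) by rewrite !PhidE e1 e2.
case: aut => _ [G [_ [c1 _]]].
have := congr1 G e; rewrite !c1 !dmxE => /mk2_inj [] /= -> _ _ ->.
by [].
Qed.

Lemma pfF a b a' b' : pf (fun t => F (a + t * b) (a' + t * b')).
Proof.
have := pf_line (dmx (a, a')) (dmx (b, b')) ord0 ord0 (proj1 aut).
apply: pf_ext => t; rewrite /F; congr (Phi _ _ _).
by rewrite !dmxE scalemx2 addmx2; apply: mk2_eq => /=; ring.
Qed.

End Main.


Section Main2.
Variable K : numClosedFieldType.
Variable Phi : 'M[K]_2 -> 'M[K]_2.
Hypothesis aut : poly_mx_aut Phi.
Hypothesis cc : conj_compatible Phi.

Local Notation F := (F Phi).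

Definition X (s d : K) := (s + d) / 2%:R.
Definition Y (s d : K) := (s - d) / 2%:R.

Lemma XYx x y : X (x + y) (x - y) = x.
Proof. by rewrite /X; field. Qed.
Lemma XYy x y : Y (x + y) (x - y) = y.
Proof. by rewrite /Y; field; rewrite ?pnatr_eq0. Qed.
Lemma XmY s d : X s d - Y s d = d.
Proof. by rewrite /X /Y; field; rewrite ?pnatr_eq0. Qed.
Lemma XpY s d : X s d + Y s d = s.
Proof. by rewrite /X /Y; field; rewrite ?pnatr_eq0. Qed.

Lemma sumdiff (a b a' b' : K) : a + b = a' + b' -> a - b = a' - b' -> a = a' /\ b = b'.
Proof.
move=> e1 e2.
have u0 : a - a' = 0.
  apply: half_eq.
  have h1 : a - a' = b' - b + ((a + b) - (a' + b')) by ring.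
  rewrite e1 subrr addr0 in h1.
  have h2 : a - a' = b - b' + ((a - b) - (a' - b')) by ring.
  rewrite e2 subrr addr0 in h2.
  by rewrite {1}h1 h2 opprB.
split; first by apply/eqP; rewrite -subr_eq0 u0.
by move/eqP: u0; rewrite subr_eq0 => /eqP ea; move: e1; rewrite ea => /addrI.
Qed.

Definition Dp s d := F (X s d) (Y s d) - F (Y s d) (X s d).
Definition Sp s d := F (X s d) (Y s d) + F (Y s d) (X s d).

Lemma pf_s1 d : pf (fun s => F (X s d) (Y s d)).
Proof.
apply: (pf_ext _ (pfF aut (d / 2%:R) (1 / 2%:R) (- d / 2%:R) (1 / 2%:R))) => s.
by congr (F _ _); rewrite /X /Y; field; rewrite ?pnatr_eq0.
Qed.
Lemma pf_s2 d : pf (fun s => F (Y s d) (X s d)).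
Proof.
apply: (pf_ext _ (pfF aut (- d / 2%:R) (1 / 2%:R) (d / 2%:R) (1 / 2%:R))) => s.
by congr (F _ _); rewrite /X /Y; field; rewrite ?pnatr_eq0.
Qed.
Lemma pf_d1 s : pf (fun d => F (X s d) (Y s d)).
Proof.
apply: (pf_ext _ (pfF aut (s / 2%:R) (1 / 2%:R) (s / 2%:R) (- 1 / 2%:R))) => d.
by congr (F _ _); rewrite /X /Y; field; rewrite ?pnatr_eq0.
Qed.
Lemma pf_d2 s : pf (fun d => F (Y s d) (X s d)).
Proof.
apply: (pf_ext _ (pfF aut (s / 2%:R) (- 1 / 2%:R) (s / 2%:R) (1 / 2%:R))) => d.
by congr (F _ _); rewrite /X /Y; field; rewrite ?pnatr_eq0.
Qed.

Lemma Dp_nz s d : d != 0 -> Dp s d != 0.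
Proof.
move=> dn0; apply/negP; rewrite /Dp subr_eq0 => /eqP e.
have [h _] := Finj aut cc e (esym e).
by move: dn0; rewrite -(XmY s d) h subrr eqxx.
Qed.

Definition Dd d := Dp 0 d.

Lemma Dconst s d : Dp s d = Dd d.
Proof.
have [->|dn0] := eqVneq d 0.
  by rewrite /Dd /Dp /X /Y !subr0 !addr0 !subrr.
have := U1 (pf_sub (pf_s1 d) (pf_s2 d)) (fun s => Dp_nz s dn0).
by move=> h; rewrite /Dd /Dp (h s).
Qed.

Lemma Sp_inj d s s' : Sp s d = Sp s' d -> s = s'.
Proof.
move=> e.
have e2 : Dp s d = Dp s' d by rewrite !Dconst.
have [h1 h2] := sumdiff e e2.
have [hx hy] := Finj aut cc h1 h2.
by rewrite -(XpY s d) hx hy XpY.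
Qed.

Lemma Sp_lin d s : Sp s d = (Sp 1 d - Sp 0 d) * s + Sp 0 d.
Proof.
have [a [b hab]] := U3 (pf_add (pf_s1 d) (pf_s2 d)) (@Sp_inj d).
by rewrite /Sp !hab; ring.
Qed.

Definition al d := Sp 1 d - Sp 0 d.

Lemma al_nz d : al d != 0.
Proof.
apply/negP; rewrite /al subr_eq0 => /eqP /Sp_inj /eqP.
by rewrite oner_eq0.
Qed.

Lemma al_const d : al d = al 0.
Proof.
apply: (U1 _ al_nz).
rewrite /al /Sp.
by apply: pf_sub; apply: pf_add; [apply: pf_d1|apply: pf_d2|apply: pf_d1|apply: pf_d2].
Qed.

Lemma Dd_inj : injective Dd.
Proof.
move=> d0 d1 e.
pose s0 := (Sp 0 d1 - Sp 0 d0) / al 0.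
have e1 : Sp s0 d0 = Sp 0 d1.
  rewrite Sp_lin -/(al d0) al_const /s0.
  by field; apply: al_nz.
have e2 : Dp s0 d0 = Dp 0 d1 by rewrite Dconst e.
have [h1 h2] := sumdiff e1 e2.
have [hx hy] := Finj aut cc h1 h2.
by rewrite -(XmY s0 d0) hx hy XmY.
Qed.

Lemma structure : exists (c a : K) (be : K -> K),
  c != 0 /\ a != 0 /\ pf be /\
  forall x y, F x y - F y x = c * (x - y) /\ F x y + F y x = a * (x + y) + be (x - y).
Proof.
have [c [e he0]] := U3 (pf_sub (pf_d1 0) (pf_d2 0)) Dd_inj.
have he : forall d, Dd d = c * d + e by move=> d; exact: he0.
have D0 : Dd 0 = 0 by rewrite /Dd /Dp /X /Y !subr0 !addr0 !subrr.
have e0 : e = 0 by move: (he 0); rewrite D0 mulr0 add0r.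
have cn0 : c != 0.
  apply/negP => /eqP c0.
  have := @Dd_inj 0 1.
  by rewrite !he c0 !mul0r => /(_ erefl) /eqP; rewrite eq_sym oner_eq0.
exists c, (al 0), (fun d => Sp 0 d); split => //; split; first exact: al_nz.
split; first by apply: pf_add; [apply: pf_d1|apply: pf_d2].
move=> x y; split.
  have := Dconst (x + y) (x - y).
  by rewrite /Dp XYx XYy => ->; rewrite he e0 addr0.
have := Sp_lin (x - y) (x + y).
by rewrite /Sp XYx XYy => ->; rewrite -/(al _) al_const.
Qed.

End Main2.


Section Disc.
Variable K : numClosedFieldType.

Lemma det2 (M : 'M[K]_2) : \det M = M ord0 ord0 * M i1 i1 - M ord0 i1 * M i1 ord0.
Proof.
rewrite (expand_det_row _ ord0) !big_ord_recr big_ord0 /= /cofactor !det_mx11 !mxE /=.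
have e1 : widen_ord (leqnSn 1) ord_max = ord0 :> 'I_2 by apply: val_inj.
have e2 : lift ord0 0 = ord_max :> 'I_2 by apply: val_inj.
have e3 : lift ord_max 0 = ord0 :> 'I_2 by apply: val_inj.
rewrite e1 e2 e3 expr0 expr1 /i1; ring.
Qed.

Lemma tr2 (M : 'M[K]_2) : \tr M = M ord0 ord0 + M i1 i1.
Proof.
rewrite /mxtrace !big_ord_recr big_ord0 /= add0r.
have e1 : widen_ord (leqnSn 1) ord_max = ord0 :> 'I_2 by apply: val_inj.
by rewrite e1.
Qed.

Definition Lf (M : 'M[K]_2) := (M ord0 ord0 - M i1 i1) ^+ 2 + 4%:R * (M ord0 i1 * M i1 ord0).

Lemma Lf_trdet M : Lf M = \tr M ^+ 2 - 4%:R * \det M.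
Proof. by rewrite tr2 det2 /Lf; ring. Qed.

Lemma Lf_mk2 a b c d : Lf (mk2 a b c d) = (a - d) ^+ 2 + 4%:R * (b * c).
Proof. by rewrite /Lf mk2_00 mk2_11 mk2_01 mk2_10. Qed.

Lemma Lf_conj A N : A \in unitmx -> Lf (A *m N *m invmx A) = Lf N.
Proof.
move=> uA; rewrite !Lf_trdet.
have -> : \tr (A *m N *m invmx A) = \tr N.
  by rewrite mxtrace_mulC mulmxA mulVmx // mul1mx.
have -> : \det (A *m N *m invmx A) = \det N.
  rewrite !det_mulmx mulrC mulrA -det_mulmx mulVmx // det1 mul1r //.
by [].
Qed.

Lemma diagonalize (M : 'M[K]_2) : Lf M != 0 ->
  exists A z, A \in unitmx /\ M *m A = A *m dmx z /\ (z.1 - z.2) ^+ 2 = Lf M.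
Proof.
rewrite (mx2E M); move: (M ord0 ord0) (M ord0 i1) (M i1 ord0) (M i1 i1) => a b c d.
rewrite Lf_mk2 => hL.
have [c0|cn0] := eqVneq c 0.
  have adn : d - a != 0.
    apply/negP => /eqP h; move: hL; rewrite c0 mulr0 mulr0 addr0.
    by rewrite -opprB h oppr0 expr2 mul0r eqxx.
  exists (mk2 1 b 0 (d - a)), (a, d); split; last split.
  - apply: (@unit_of _ _ _ _ _ 1 (- b / (d - a)) 0 (1 / (d - a))).
    rewrite mulmx2 id2; apply: mk2_eq; by field.
  - by rewrite dmxE mulmx2 mulmx2 c0 /=; apply: mk2_eq; ring.
  - by rewrite /= c0; ring.
pose de := sqrtC ((a - d) ^+ 2 + 4%:R * (b * c)).
have hde : de ^+ 2 = (a - d) ^+ 2 + 4%:R * (b * c) by rewrite sqrtCK.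
have den0 : de != 0.
  by apply/negP => /eqP h; move: hL; rewrite -hde h expr2 mul0r eqxx.
pose l1 := (a + d + de) / 2%:R.
pose l2 := (a + d - de) / 2%:R.
have key : forall l, l = l1 \/ l = l2 -> a * (l - d) + b * c = (l - d) * l.
  move=> l hl; apply/eqP; rewrite -subr_eq0.
  have -> : a * (l - d) + b * c - (l - d) * l =
            - (de ^+ 2 - ((a - d) ^+ 2 + 4%:R * (b * c))) / 4%:R.
    by case: hl => ->; rewrite /l1 /l2; field; rewrite ?pnatr_eq0.
  by rewrite hde subrr oppr0 mul0r.
exists (mk2 (l1 - d) (l2 - d) c c), (l1, l2); split; last split.
- apply: (@unit_of _ _ _ _ _ (1 / de) ((d - l2) / (c * de)) (- 1 / de) ((l1 - d) / (c * de))).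
  rewrite mulmx2 id2; apply: mk2_eq; rewrite /l1 /l2; by field; rewrite ?den0 ?cn0 ?pnatr_eq0.
- rewrite dmxE mulmx2 mulmx2 /=; apply: mk2_eq.
  + by rewrite key; [ring | left].
  + by rewrite key; [ring | right].
  + by ring.
  + by ring.
- by rewrite /= /l1 /l2 -hde; field; rewrite ?pnatr_eq0.
Qed.

End Disc.


Section Key.
Variable K : numClosedFieldType.
Variable Phi : 'M[K]_2 -> 'M[K]_2.
Hypothesis aut : poly_mx_aut Phi.
Hypothesis cc : conj_compatible Phi.
Variable c : K.
Hypothesis hc : forall x y, F Phi x y - F Phi y x = c * (x - y).

Lemma LD z : Lf (Phi (dmx z)) = c ^+ 2 * (z.1 - z.2) ^+ 2.
Proof.
case: z => x y; rewrite (PhidE cc) Lf_mk2 mulr0 mulr0 addr0 hc /=.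
by rewrite exprMn.
Qed.

Lemma Lf_Phi_nz M : Lf M != 0 -> Lf (Phi M) = c ^+ 2 * Lf M.
Proof.
move=> hM; have [A [z [uA [e hz]]]] := diagonalize hM.
have h := conj_step cc uA e.
have -> : Phi M = A *m Phi (dmx z) *m invmx A by rewrite -h mulmxK.
by rewrite Lf_conj // LD hz.
Qed.

Lemma pf_Lf (N : K -> 'M[K]_2) : (forall i j, pf (fun t => N t i j)) ->
  pf (fun t => Lf (N t)).
Proof.
move=> h; rewrite /Lf.
apply: pf_add; first by apply: pf_exp; apply: pf_sub; apply: h.
by apply: pf_mul; [apply: pf_const | apply: pf_mul; apply: h].
Qed.

Lemma pf_entry (M0 M1 : 'M[K]_2) i j : pf (fun t => (M0 + t *: M1) i j).
Proof.
apply: (pf_ext (g := fun t => M0 i j + t * M1 i j)); first by move=> t; rewrite !mxE.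
by apply: pf_add; [apply: pf_const | apply: pf_mul; [apply: pf_id|apply: pf_const]].
Qed.

Lemma Lf_Phi M : Lf (Phi M) = c ^+ 2 * Lf M.
Proof.
pose E := mk2 (1 : K) 0 0 0.
pose N := fun t : K => M + t *: E.
have [qg hg] : pf (fun t => Lf (Phi (N t)) - c ^+ 2 * Lf (N t)).
  apply: pf_sub; first by apply: pf_Lf => i j; apply: pf_line; case: aut.
  by apply: pf_mul; [apply: pf_const | apply: pf_Lf => i j; apply: pf_entry].
have [qh hh] : pf (fun t => Lf (N t)) by apply: pf_Lf => i j; apply: pf_entry.
have prod0 : qg * qh = 0.
  apply: (@poly_zero K) => t; rewrite hornerM -hg -hh.
  have [->|nz] := eqVneq (Lf (N t)) 0; first by rewrite mulr0.
  by rewrite Lf_Phi_nz // subrr mul0r.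
have qhn0 : qh != 0.
  apply/negP => /eqP qh0.
  have hN : forall t, Lf (N t) = (M ord0 ord0 + t - M i1 i1) ^+ 2
                               + 4%:R * (M ord0 i1 * M i1 ord0).
    move=> t; rewrite /Lf /N !mxE /=; ring.
  have z : forall t, Lf (N t) = 0 by move=> t; rewrite hh qh0 horner0.
  have e2 : (2%:R : K) = Lf (N 1) + Lf (N (-1)) - 2%:R * Lf (N 0) by rewrite !hN; ring.
  move: e2; rewrite !z mulr0 subr0 addr0 => /eqP.
  by rewrite pnatr_eq0.
move/eqP: prod0; rewrite mulf_eq0 (negPf qhn0) orbF => /eqP qg0.
have := hg 0; rewrite qg0 horner0 /N scale0r addr0 => /eqP.
by rewrite subr_eq0 => /eqP.
Qed.

End Key.


Lemma Lf_poly (K : numClosedFieldType) : poly_mx_fun (@Lf K).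
Proof.
pose k (i j : 'I_2) : 'I_4 := mxvec_index i j.
exists (('X_(k ord0 ord0) - 'X_(k i1 i1)) * ('X_(k ord0 ord0) - 'X_(k i1 i1))
        + 4%:R *: ('X_(k ord0 i1) * 'X_(k i1 ord0))) => M.
rewrite mevalD mevalZ !mevalM !mevalB !mevalXU /mx_coords /k !mxvecE.
by rewrite /Lf expr2.
Qed.

Theorem theorem2p9 (R : realType) (Phi : 'M[R[i]]_2 -> 'M[R[i]]_2) :
  poly_mx_aut Phi -> conj_compatible Phi ->
  elementary_aut (diag_restr Phi) /\
  exists L : 'M[R[i]]_2 -> R[i],
    poly_mx_fun L /\ transverse_to_D L /\ preserves_fibration Phi L.
Proof.
move=> aut cc.
have [c [a [be [cn0 [an0 [[P hP] hs]]]]]] := structure aut cc.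
split; last first.
  exists (@Lf _); split; first exact: Lf_poly.
  split.
    exists (1, 0), (0, 0); rewrite !dmxE !Lf_mk2 /= !mulr0 !addr0 subr0 subrr.
    by rewrite !expr2 mulr1 mul0r oner_eq0.
  move=> M N e.
  have hc : forall x y, F Phi x y - F Phi y x = c * (x - y) by move=> x y; case: (hs x y).
  by rewrite !(Lf_Phi aut cc hc) e.
pose psi := fun z : R[i] * R[i] => (z.1 + z.2, z.1 - z.2).
pose psiinv := fun z : R[i] * R[i] => ((z.1 + z.2) / 2%:R, (z.1 - z.2) / 2%:R).
have c1 : cancel psi psiinv.
  by case=> x y; rewrite /psi /psiinv /=; congr pair; field; rewrite ?pnatr_eq0.
have c2 : cancel psiinv psi.
  by case=> x y; rewrite /psi /psiinv /=; congr pair; field; rewrite ?pnatr_eq0.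
have pm1 : poly_map2 psi.
  exists ('X_ord0 + 'X_i1), ('X_ord0 - 'X_i1) => z.
  by rewrite mevalD mevalB !mevalXU /pt_coords.
have pm2 : poly_map2 psiinv.
  exists ((2%:R)^-1 *: ('X_ord0 + 'X_i1)), ((2%:R)^-1 *: ('X_ord0 - 'X_i1)) => z.
  by rewrite !mevalZ mevalD mevalB !mevalXU /pt_coords /psiinv /= !(mulrC (2%:R)^-1).
exists psi, psiinv; split; first by split => //; exists psiinv.
split => //; split => //.
exists a, c, 0, P; split => //; split => //.
case=> x y; rewrite /diag_restr /psi /psiinv /=.
have [h1 h2] := hs x y.
rewrite -hP -h2 -h1 addr0 -/(F Phi x y).
have -> : Phi (dmx (x, y)) ord_max ord_max = F Phi y x by exact: swapF.
by congr pair; field; rewrite ?pnatr_eq0.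
Qed.
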